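(* Let $p$ be an external position with $m=|B(p)|\ge 2$, and let $j_1\le\dots\le j_{n-m}$ be the values $\bar p_i$, $i\notin B(p)$, in non-decreasing order. Then: (a) the independent rotation group satisfies $G_{rot}(p)=\mathrm{Alt}(B(p))$ if $m=n$ and $G_{rot}(p)=\mathrm{Sym}(B(p))$ if $m<n$; (b) the dependent rotation group satisfies $\overline{G}_{rot}(p)=\mathrm{Alt}(B(p))$ if $m=n$ or $j_1<j_2<\dots<j_{n-m}<(k-1)/2$, and $\overline{G}_{rot}(p)=\mathrm{Sym}(B(p))$ if $m<n$ and either $j_{n-m}=(k-1)/2$ or there is $r$ with $j_r=j_{r+1}<(k-1)/2$.
   Context: Fix integers $k\ge 2$, $n\ge 3$, $M=\{0,\dots,k-1\}$. Positions are $p\in M^n$ (cubie $\prod_i[p_i,p_i+1]\subset[0,k]^n$); $B(p)=\{i:p_i\in\{0,k-1\}\}$, $p$ external if $B(p)\ne\emptyset$; for $x\in\{1,\dots,k-2\}$, $\bar x=\min(x,k-1-x)$. For distinct $i,j$, $\psi_{i,j}:M^n\to M^n$ is $(\psi_{i,j}p)_i=k-1-p_j$, $(\psi_{i,j}p)_j=p_i$, other coordinates unchanged; note $B(\psi_{i,j}p)=\tau_{ij}(B(p))$ with $\tau_{ij}$ the transposition of $i,j$. A move is given by distinct $i,j$ and constants $c_l\in M$ ($l\notin\{i,j\}$) and applies $\psi_{i,j}$ to all positions $p$ with $p_l=c_l$ ($l\notin\{i,j\}$), fixing the others; a combination is a finite sequence of moves. Orientation faces: the cubie at an external $p$ has $|B(p)|$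 orientation faces indexed by $l\in B(p)$, face $l$ being the intersection of the cubie with the hyperplanes $x_s=0$ (if $p_s=0$) or $x_s=k$ (if $p_s=k-1$) for $s\in B(p)\setminus\{l\}$. Let $X=\{(p,l): p\text{ external}, l\in B(p)\}$; a move with parameters $i,j$ acts on $X$ by $(p,l)\mapsto(\psi_{i,j}(p),\tau_{ij}(l))$ for $p$ in its layer and fixes $(p,l)$ otherwise; a combination acts on $X$ by composition (this tracks where each orientation face of each cubie goes). The dependent rotation group $\overline{G}_{rot}(p)$ is the set of permutations of $B(p)$ induced on $\{p\}\times B(p)$ by combinations $g$ with $g(p)=p$. The independent rotation group $G_{rot}(p)$ is the group of permutations of the orientation faces of the cubie at $p$ (identified with permutations of $B(p)$) induced by orientation-preserving isometries of $\mathbb{R}^n$ that map the cubie onto itself and map its set of orientation faces onto itself. *)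

(* Defs.v *)
From HB Require Import structures.
From mathcomp Require Import all_boot all_order all_algebra all_fingroup.
From mathcomp Require Import reals.
Set Implicit Arguments. Unset Strict Implicit. Unset Printing Implicit Defensive.
Import Order.TTheory GRing.Theory Num.Theory.

Definition pos (k n : nat) := {ffun 'I_n -> 'I_k}.

Definition Bset k n (p : pos k n) : {set 'I_n} :=
  [set i | (val (p i) == 0) || (val (p i) == k.-1)].

Definition psi k n (i j : 'I_n) (p : pos k n) : pos k n :=
  [ffun l => if l == i then rev_ord (p j) else if l == j then p i else p l].

(* A move: indices i j and constants c_l (only used for l outside {i,j}). *)
Record move (k n : nat) := Move { mv_i : 'I_n; mv_j : 'I_n; mv_c : pos k n }.

Definition valid_move k n (mv : move k n) : bool := mv_i mv != mv_j mv.

Definition in_layer k n (mv : move k n) (p : pos k n) : bool :=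
  [forall l, ((l != mv_i mv) && (l != mv_j mv)) ==> (p l == mv_c mv l)].

Definition move_pos k n (mv : move k n) (p : pos k n) : pos k n :=
  if in_layer mv p then psi (mv_i mv) (mv_j mv) p else p.

(* action of a move on pairs (p,l) (orientation faces) *)
Definition move_X k n (mv : move k n) (x : pos k n * 'I_n) : pos k n * 'I_n :=
  if in_layer mv x.1 then (psi (mv_i mv) (mv_j mv) x.1, tperm (mv_i mv) (mv_j mv) x.2)
  else x.

Definition comb_pos k n (g : seq (move k n)) (p : pos k n) : pos k n :=
  foldl (fun q mv => move_pos mv q) p g.

Definition comb_X k n (g : seq (move k n)) (x : pos k n * 'I_n) : pos k n * 'I_n :=
  foldl (fun y mv => move_X mv y) x g.

Definition SymB n (B : {set 'I_n}) (s : {perm 'I_n}) : Prop := perm_on B s.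
Definition AltB n (B : {set 'I_n}) (s : {perm 'I_n}) : Prop :=
  perm_on B s /\ ~~ odd_perm s.

Definition dep_rot k n (p : pos k n) (s : {perm 'I_n}) : Prop :=
  perm_on (Bset p) s /\
  exists g : seq (move k n),
    all (@valid_move k n) g /\ comb_pos g p = p /\
    forall l, l \in Bset p -> comb_X g (p, l) = (p, s l).

Local Open Scope ring_scope.
Definition cubie (R : realType) k n (p : pos k n) (x : 'rV[R]_n) : Prop :=
  forall i, ((val (p i))%:R <= x ord0 i) /\ (x ord0 i <= (val (p i)).+1%:R).

Definition oface (R : realType) k n (p : pos k n) (l : 'I_n) (x : 'rV[R]_n) : Prop :=
  cubie p x /\
  forall s, s \in Bset p -> s != l ->
    x ord0 s = (if val (p s) == 0 then 0 else k%:R).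

Definition maps_onto (T1 T2 : Type) (f : T1 -> T2) (S : T1 -> Prop) (T : T2 -> Prop) : Prop :=
  forall y, T y <-> exists2 x, S x & f x = y.

(* orientation-preserving isometries of R^n: x |-> x A + b, A orthogonal, det A = 1 *)
Definition proper_orth (R : realType) n (A : 'M[R]_n) : Prop :=
  A *m A^T = 1%:M /\ \det A = 1.

Definition ind_rot (R : realType) k n (p : pos k n) (s : {perm 'I_n}) : Prop :=
  perm_on (Bset p) s /\
  exists (A : 'M[R]_n) (b : 'rV[R]_n),
    proper_orth A /\
    maps_onto (fun x => x *m A + b) (@cubie R k n p) (@cubie R k n p) /\
    forall l, l \in Bset p ->
      maps_onto (fun x => x *m A + b) (@oface R k n p l) (@oface R k n p (s l)).

Local Close Scope ring_scope.
Definition barv (k x : nat) : nat := minn x (k.-1 - x).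

Definition jseq k n (p : pos k n) : seq nat :=
  sort leq [seq barv k (val (p i)) | i <- enum (~: Bset p)].

(* Main.v *)
Require Import Defs.
From HB Require Import structures.
From mathcomp Require Import all_boot all_order all_algebra all_fingroup.
From mathcomp Require Import reals.
From mathcomp Require Import zify ring lra.
Set Implicit Arguments. Unset Strict Implicit. Unset Printing Implicit Defensive.
Import Order.TTheory GRing.Theory Num.Theory.

Definition fv k (b : bool) (x : 'I_k) : 'I_k := if b then x else rev_ord x.

Definition track k n (g : seq (move k n)) (st : pos k n * {perm 'I_n}) :=
  foldl (fun st mv => if in_layer mv st.1
     then (psi (mv_i mv) (mv_j mv) st.1, (st.2 * tperm (mv_i mv) (mv_j mv))%g)
     else st) st g.

Lemma track_pos k n (g : seq (move k n)) q s :
  comb_pos g q = (track g (q, s)).1.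
Proof.
elim: g q s => [|mv g IH] q s //=.
rewrite /comb_pos /track /= -/(comb_pos g _) -/(track g _) /move_pos.
by case: ifP => _; rewrite -IH.
Qed.

Lemma track_X k n (g : seq (move k n)) q (s : {perm 'I_n}) x :
  comb_X g (q, s x) = ((track g (q, s)).1, (track g (q, s)).2 x).
Proof.
elim: g q s => [|mv g IH] q s //=.
rewrite /comb_X /track /= -/(comb_X g _) -/(track g _) /move_X /=.
case: ifP => _; last by rewrite IH.
by rewrite -IH permM.
Qed.

Definition Qp k n (p : pos k n) (s : {perm 'I_n}) (F : {set 'I_n}) : pos k n :=
  [ffun x => fv ((s^-1)%g x \notin F) (p ((s^-1)%g x))].

Definition toggle n (F : {set 'I_n}) z := if z \in F then F :\ z else z |: F.

Lemma odd_toggle n (F : {set 'I_n}) z : odd #|toggle F z| = ~~ odd #|F|.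
Proof.
rewrite /toggle; case: ifP => zF.
  by rewrite (cardsD1 z F) zF /= negbK.
by rewrite cardsU1 zF.
Qed.

Lemma in_toggle n (F : {set 'I_n}) z x :
  (x \in toggle F z) = if x == z then z \notin F else x \in F.
Proof.
rewrite /toggle; case: ifP => zF; case: eqP => [->|ne].
- by rewrite !inE eqxx zF.
- by rewrite !inE; move/eqP: ne => ->.
- by rewrite !inE eqxx zF.
- by rewrite !inE; move/eqP: ne => /negbTE ->.
Qed.

Lemma Q_step k n (p : pos k n) s F (i j : 'I_n) : i != j ->
  psi i j (Qp p s F) = Qp p (s * tperm i j)%g (toggle F ((s^-1)%g j)).
Proof.
move=> ij; apply/ffunP => x; rewrite /psi /Qp !ffunE invMg permM tpermV.
case: (eqVneq x i) => [->|xi].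
  rewrite tpermL in_toggle eqxx /fv.
  by case: ((s^-1)%g j \in F) => //=; rewrite rev_ordK.
case: (eqVneq x j) => [->|xj].
  rewrite tpermR in_toggle.
  have -> : ((s^-1)%g i == (s^-1)%g j) = false.
    by apply/negbTE; apply: contra ij => /eqP /perm_inj ->.
  done.
rewrite tpermD; [|by rewrite eq_sym|by rewrite eq_sym].
rewrite in_toggle.
have -> : ((s^-1)%g x == (s^-1)%g j) = false.
  by apply/negbTE; apply: contra xj => /eqP /perm_inj ->.
done.
Qed.

Definition Reach k n (p : pos k n) q s :=
  exists g : seq (move k n), all (@valid_move k n) g /\ track g (p, 1%g) = (q, s).

Lemma reach_step k n (p : pos k n) q s (i j : 'I_n) :
  Reach p q s -> i != j -> Reach p (psi i j q) (s * tperm i j)%g.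
Proof.
move=> [g [vg tg]] ij; exists (rcons g (Move i j q)); split.
  by rewrite all_rcons vg /valid_move /= ij.
rewrite /track foldl_rcons -/(track g _) tg /=.
suff -> : in_layer (Move i j q) q by [].
by apply/forallP => l; apply/implyP => _ /=.
Qed.

Lemma psi4 k n (i j : 'I_n) (q : pos k n) : i != j ->
  psi i j (psi i j (psi i j (psi i j q))) = q.
Proof.
move=> ij; apply/ffunP => x; rewrite /psi !ffunE.
have ji : j != i by rewrite eq_sym.
have rK : forall y : 'I_k, rev_ord (rev_ord y) = y by move=> y; apply: rev_ordK.
case: (eqVneq x i) => [->|xi]; first by rewrite !eqxx (negbTE ji) rK.
case: (eqVneq x j) => [->|xj]; first by rewrite !eqxx (negbTE ji) rK.
by [].
Qed.

Lemma reach_back k n (p : pos k n) q s (i j : 'I_n) :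
  Reach p (psi i j q) (s * tperm i j)%g -> i != j -> Reach p q s.
Proof.
move=> h ij.
have := reach_step (reach_step (reach_step h ij) ij) ij.
rewrite psi4 //.
have -> : (s * tperm i j * tperm i j * tperm i j * tperm i j = s)%g.
  by rewrite -(mulgA s) tperm2 mulg1 -(mulgA s) tperm2 mulg1.
done.
Qed.

Lemma Q1 k n (p : pos k n) : Qp p 1%g set0 = p.
Proof. by apply/ffunP => x; rewrite ffunE invg1 perm1 inE. Qed.

Lemma reach_id k n (p : pos k n) : forall N (F : {set 'I_n}),
  #|F| < N -> ~~ odd #|F| -> Reach p (Qp p 1%g F) 1%g.
Proof.
elim=> [//|N IH] F hN hpar.
case: (set_0Vmem F) => [->|[x xF]].
  by rewrite Q1; exists [::].
have : 0 < #|F :\ x|.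
  move: hpar; rewrite (cardsD1 x F) xF /=.
  by case: #|F :\ x|.
case/card_gt0P => y; rewrite !inE => /andP [yx yF].
have xy : x != y by rewrite eq_sym.
apply: (reach_back (i:=x) (j:=y)) => //.
rewrite Q_step // mul1g.
apply: (reach_back (i:=x) (j:=y)) => //.
rewrite Q_step // tperm2 tpermV tpermR.
have -> : toggle (toggle F (((1 : {perm 'I_n})^-1)%g y)) x = F :\ y :\ x.
  rewrite invg1 perm1 /toggle yF.
  by rewrite !inE (negbTE xy) xF.
apply: IH.
  move: hN; rewrite (cardsD1 y F) yF (cardsD1 x (F :\ y)) !inE (negbTE xy) xF /=.
  lia.
move: hpar; rewrite (cardsD1 y F) yF (cardsD1 x (F :\ y)) !inE (negbTE xy) xF /=.
by rewrite negbK.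
Qed.

Lemma reach_all k n (p : pos k n) : forall N (s : {perm 'I_n}) (F : {set 'I_n}),
  #|[set x | s x != x]| < N -> odd_perm s = odd #|F| -> Reach p (Qp p s F) s.
Proof.
elim=> [//|N IH] s F hN hpar.
case: (boolP [exists x, s x != x]) => [/existsP [l hl] | hall]; last first.
  have s1 : s = 1%g.
    apply/permP => x; rewrite perm1; apply/eqP.
    by move: hall; rewrite negb_exists => /forallP /(_ x); rewrite negbK.
  subst s.
  apply: (@reach_id k n p #|F|.+1) => //.
  by rewrite -hpar odd_perm1.
set j := s l.
have lj : l != j by rewrite eq_sym.
apply: (reach_back (i:=l) (j:=j)) => //.
rewrite Q_step //.
apply: IH; last by rewrite odd_permM odd_tperm lj odd_toggle hpar addbT.
have sub : [set x | (s * tperm l j)%g x != x] \proper [set x | s x != x].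
  apply/properP; split.
    apply/subsetP => x; rewrite !inE permM; apply: contraNN => /eqP sx.
    rewrite sx tpermD //.
      by apply/eqP => lx; move: hl; rewrite lx sx eqxx.
    apply/eqP => jx; move: sx; rewrite -jx => /perm_inj ljj.
    by move: lj; rewrite ljj eqxx.
  exists l; first by rewrite inE.
  by rewrite inE permM tpermR negbK.
move: hN; rewrite ltnS => hN.
exact: (leq_trans (proper_card sub) hN).
Qed.

Lemma track_inv k n (p : pos k n) (g : seq (move k n)) (s : {perm 'I_n}) (F : {set 'I_n}) :
  all (@valid_move k n) g -> odd_perm s = odd #|F| ->
  exists F', (track g (Qp p s F, s)).1 = Qp p (track g (Qp p s F, s)).2 F' /\
             odd_perm (track g (Qp p s F, s)).2 = odd #|F'|.
Proof.
elim: g s F => [|mv g IH] s F /=; first by move=> _ h; exists F.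
case/andP => vm0 vg hpar.
have vm : mv_i mv != mv_j mv := vm0.
rewrite /track /= -/(track g _).
case: ifP => _; last exact: IH.
rewrite Q_step //.
apply: IH => //.
by rewrite odd_permM odd_tperm vm odd_toggle hpar addbT.
Qed.

Lemma barv_rev k (x : 'I_k) : barv k (rev_ord x) = barv k x.
Proof. rewrite /barv /=; have := ltn_ord x; lia. Qed.

Lemma barv_fv k b (x : 'I_k) : barv k (fv b x) = barv k x.
Proof. by case: b => //=; rewrite barv_rev. Qed.

Lemma inB k n (p : pos k n) l : (l \in Bset p) = (barv k (p l) == 0).
Proof.
rewrite inE /barv; have := ltn_ord (p l).
case: (p l) => x /= hx _.
apply/idP/idP; lia.
Qed.

Lemma rev_neq_B k n (p : pos k n) l : 2 <= k -> l \in Bset p -> (rev_ord (p l) == p l) = false.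
Proof.
move=> k2; rewrite inE => hb; apply/negbTE/eqP => /(congr1 val) /=.
move: hb; have := ltn_ord (p l); case: (p l) => x /= hx _; lia.
Qed.

Lemma valB k n (p : pos k n) l l' : 2 <= k -> l \in Bset p -> l' \in Bset p ->
  p l' != p l -> p l' = rev_ord (p l).
Proof.
move=> k2; rewrite !inE => h1 h2 ne; apply: val_inj => /=.
move: ne h1 h2; have := ltn_ord (p l); have := ltn_ord (p l').
case: (p l) => x /= hx; case: (p l') => y /= hy _ _ ne.
have ne' : x != y by apply: contra ne => /eqP exy; apply/eqP; apply: val_inj => /=.
lia.
Qed.

Lemma even_F k n (p : pos k n) (s : {perm 'I_n}) : perm_on (Bset p) s ->
  ~~ odd #|[set l in Bset p | p (s l) != p l]|.
Proof.
have hB : forall l, (l \in Bset p) = (val (p l) == 0) || (val (p l) == k.-1).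
  by move=> l; rewrite inE.
move: (Bset p) hB => B hB ps.
set Z := [set l in B | val (p l) == 0].
set W := [set l | s l \in Z].
have cW : #|W| = #|Z|.
  have -> : W = s @^-1: Z by apply/setP => x; rewrite !inE.
  by rewrite card_preimset //; apply: perm_inj.
have -> : [set l in B | p (s l) != p l] = (Z :\: W) :|: (W :\: Z).
  apply/setP => l; rewrite !inE.
  case: (boolP (l \in B)) => lB /=; last first.
    by rewrite (out_perm ps lB) (negbTE lB) andbF.
  have slB : s l \in B by rewrite (perm_closed _ ps).
  rewrite slB /=.
  move: lB slB; rewrite !hB.
  have := ltn_ord (p l); have := ltn_ord (p (s l)).
  case: (p l) => x /= hx; case: (p (s l)) => y /= hy.
  have -> : (Ordinal hy != Ordinal hx) = (y != x) by [].
  move=> h1 h2 h3 h4; apply/idP/idP; lia.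
rewrite cardsU.
have -> : (Z :\: W) :&: (W :\: Z) = set0.
  by apply/setP => l; rewrite !inE; case: (l \in B); case: (s l \in B); case: (val (p l) == 0); case: (val (p (s l)) == 0).
rewrite cards0 subn0 !cardsD cW (setIC W Z).
by rewrite addnn odd_double.
Qed.

Lemma dep_even k n (p : pos k n) s : 2 <= k ->
  (forall t u, t \notin Bset p -> u \notin Bset p -> barv k (p t) = barv k (p u) -> t = u) ->
  (forall t, t \notin Bset p -> 2 * val (p t) != k.-1) ->
  dep_rot p s -> ~~ odd_perm s.
Proof.
move=> k2 hinj hhalf [ps [g [vg [cp cx]]]].
have par0 : odd_perm (1%g : {perm 'I_n}) = odd #|(set0 : {set 'I_n})| by rewrite odd_perm1 cards0.
have [F' [h1 h2]] := @track_inv k n p g 1%g set0 vg par0.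
rewrite Q1 in h1 h2.
have hp : (track g (p, 1%g)).1 = p by rewrite -(track_pos g p 1%g) cp.
move: h1 h2; rewrite hp.
move: (track g (p, 1%g)).2 (track_X g p 1%g) => sg hX h1 h2.
have hsl : forall l, l \in Bset p -> s l = sg l.
  move=> l lB; have := hX l; rewrite perm1 hp (cx l lB).
  by case.
have key : forall l, p (sg l) = fv (l \notin F') (p l).
  move=> l; have := congr1 (fun q : pos k n => q (sg l)) h1.
  by rewrite /= /Qp ffunE permK.
have fixout : forall l, l \notin Bset p -> sg l = l /\ l \notin F'.
  move=> l lB.
  have bl : barv k (p (sg l)) = barv k (p l) by rewrite key barv_fv.
  have slB : sg l \notin Bset p by rewrite inB bl -inB.
  have e := hinj _ _ slB lB bl; split => //.
  apply/negP => lF; move: (key l); rewrite e lF /= => /(congr1 val) /=.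
  move: (hhalf l lB); case: (p l) => x hx /=; lia.
have ss : s = sg.
  apply/permP => l; case: (boolP (l \in Bset p)) => lB; first exact: hsl.
  by rewrite (out_perm ps lB) (fixout l lB).1.
have psg : perm_on (Bset p) sg by rewrite -ss.
have eF : F' = [set l in Bset p | p (sg l) != p l].
  apply/setP => l; rewrite inE; case: (boolP (l \in Bset p)) => lB /=; last first.
    by rewrite (negbTE (fixout l lB).2).
  rewrite key; case: (l \in F') => /=; first by rewrite rev_neq_B.
  by rewrite eqxx.
by rewrite ss h2 eF; apply: even_F.
Qed.

Lemma constr k n (p : pos k n) (s t : {perm 'I_n}) (F2 : {set 'I_n}) : 2 <= k ->
  perm_on (Bset p) s -> perm_on (~: Bset p) t -> F2 \subset ~: Bset p ->
  (forall l, l \notin Bset p -> p (t l) = fv (l \notin F2) (p l)) ->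
  odd_perm s (+) odd_perm t = odd #|F2| -> dep_rot p s.
Proof.
move=> k2 ps pt sF2 ht hpar.
set FB := [set l in Bset p | p (s l) != p l].
set sg := (s * t)%g.
set F := FB :|: F2.
have hB : forall l, l \in Bset p -> sg l = s l.
  by move=> l lB; rewrite permM (out_perm pt) // in_setC negbK (perm_closed _ ps).
have hO : forall l, l \notin Bset p -> sg l = t l.
  by move=> l lB; rewrite permM (out_perm ps lB).
have key : forall l, p (sg l) = fv (l \notin F) (p l).
  move=> l; have hF : (l \in F) = ((l \in Bset p) && (p (s l) != p l)) || (l \in F2).
    by rewrite /F in_setU /FB in_set.
  rewrite hF; case: (boolP (l \in Bset p)) => lB /=.
    have -> : (l \in F2) = false.
      by apply/negbTE; apply: contraL lB => /(subsetP sF2); rewrite inE.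
    rewrite hB // orbF.
    case: (eqVneq (p (s l)) (p l)) => [-> //|ne] /=.
    by apply: valB => //; rewrite (perm_closed _ ps).
  by rewrite hO // ht.
have Qe : Qp p sg F = p.
  by apply/ffunP => x; rewrite ffunE -key permKV.
have par : odd_perm sg = odd #|F|.
  rewrite /F cardsU.
  have -> : FB :&: F2 = set0.
    apply/setP => l; rewrite in_setI /FB in_set in_set0; apply/negbTE.
    apply/negP => /andP [/andP [lB _] lF2].
    by move: (subsetP sF2 l lF2); rewrite in_setC lB.
  rewrite cards0 subn0 oddD (negbTE (even_F ps)) /=.
  by rewrite odd_permM hpar.
have [g [vg tg]] := @reach_all k n p #|[set x | sg x != x]|.+1 sg F (ltnSn _) par.
split => //; exists g; split => //; split.
  by rewrite (track_pos g p 1%g) tg /= Qe.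
by move=> l lB; have := track_X g p 1%g l; rewrite perm1 tg Qe hB // => ->.
Qed.

Lemma uniq_map_inj (T1 T2 : eqType) (f : T1 -> T2) s x y :
  uniq (map f s) -> x \in s -> y \in s -> f x = f y -> x = y.
Proof.
elim: s => //= a s IH /andP [fa us]; rewrite !inE.
case/orP => [/eqP ->|xs]; case/orP => [/eqP ->|ys] e //.
- by move: fa; rewrite e (map_f f ys).
- by move: fa; rewrite -e (map_f f xs).
- exact: IH.
Qed.

Lemma path_le_last a s : path leq a s -> forall x, x \in a :: s -> x <= last a s.
Proof.
elim: s a => [|b s IH] a /=; first by move=> _ x; rewrite inE => /eqP ->.
case/andP => ab pb x; rewrite inE => /orP [/eqP ->|xs].
  by apply: leq_trans ab _; apply: IH => //; rewrite mem_head.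
exact: IH.
Qed.

Lemma sorted_le_last s x : sorted leq s -> x \in s -> x <= last 0 s.
Proof.
case: s => //= a s ps xs; exact: path_le_last.
Qed.

Lemma notinB_lt k n (p : pos k n) t : t \notin Bset p -> #|Bset p| < n.
Proof.
move=> tB; have := cardsC (Bset p); rewrite card_ord => e.
have : 0 < #|~: Bset p| by apply/card_gt0P; exists t; rewrite in_setC.
lia.
Qed.

Lemma js_mem k n (p : pos k n) t : t \notin Bset p -> barv k (p t) \in jseq p.
Proof. by move=> tB; rewrite mem_sort; apply: map_f; rewrite mem_enum in_setC. Qed.

Lemma js_perm k n (p : pos k n) :
  perm_eq (jseq p) [seq barv k (p i) | i <- enum (~: Bset p)].
Proof. by rewrite /jseq perm_sort perm_refl. Qed.

Lemma partb1 k n (p : pos k n) : 2 <= k ->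
  (#|Bset p| = n \/
    ((forall r, r.+1 < size (jseq p) -> nth 0 (jseq p) r < nth 0 (jseq p) r.+1) /\
     2 * last 0 (jseq p) < k.-1)) ->
  forall s, dep_rot p s <-> AltB (Bset p) s.
Proof.
move=> k2 hc s.
have [hinj hhalf] : (forall t u, t \notin Bset p -> u \notin Bset p ->
      barv k (p t) = barv k (p u) -> t = u) /\
    (forall t, t \notin Bset p -> 2 * val (p t) != k.-1).
  case: hc => [hm|[hs hl]].
    by split => [t u tB|t tB]; have := notinB_lt tB; rewrite hm ltnn.
  have so : sorted ltn (jseq p) by apply/(sortedP 0).
  move: so; rewrite ltn_sorted_uniq_leq => /andP [uj _].
  have um : uniq [seq barv k (p i) | i <- enum (~: Bset p)].
    by rewrite -(perm_uniq (js_perm p)).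
  split.
    move=> t u tB uB e; apply: (uniq_map_inj um) e; by rewrite mem_enum in_setC.
  move=> t tB.
  have := sorted_le_last (sort_sorted leq_total _) (js_mem tB).
  rewrite -/(jseq p) => hle.
  move: hl hle; rewrite /barv; case: (p t) => x hx /=; lia.
split.
  move=> hd; split; first by case: hd.
  exact: (dep_even k2 hinj hhalf hd).
case=> ps ev.
apply: (@constr k n p s 1%g set0) => //.
- exact: perm_on1.
- exact: sub0set.
- by move=> l _; rewrite perm1 in_set0.
- by rewrite odd_perm1 cards0 addbF (negbTE ev).
Qed.

Lemma partb2 k n (p : pos k n) : 2 <= k ->
  (#|Bset p| < n /\
    (2 * last 0 (jseq p) = k.-1 \/
     exists r, r.+1 < size (jseq p) /\ nth 0 (jseq p) r = nth 0 (jseq p) r.+1 /\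
       2 * nth 0 (jseq p) r < k.-1)) ->
  forall s, dep_rot p s <-> SymB (Bset p) s.
Proof.
move=> k2 [hm hc] s; split; first by case.
move=> ps.
case: (boolP (odd_perm s)) => od; last first.
  apply: (@constr k n p s 1%g set0) => //.
  - exact: perm_on1.
  - exact: sub0set.
  - by move=> l _; rewrite perm1 in_set0.
  - by rewrite odd_perm1 cards0 addbF (negbTE od).
case: hc => [hl|[r [hr [he _]]]].
  have : last 0 (jseq p) \in 0 :: jseq p by apply: mem_last.
  rewrite inE => /orP [/eqP l0|].
    by move: hl; rewrite l0; lia.
  rewrite mem_sort => /mapP [t]; rewrite mem_enum in_setC => tB et.
  have pt : p t = rev_ord (p t).
    apply: val_inj => /=; move: hl; rewrite et /barv; case: (p t) => x hx /=; lia.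
  apply: (@constr k n p s 1%g [set t]) => //.
  - exact: perm_on1.
  - by apply/subsetP => x; rewrite inE => /eqP ->; rewrite in_setC.
  - move=> l _; rewrite perm1 inE; case: (eqVneq l t) => [->|] //=.
  - by rewrite odd_perm1 cards1 addbF od.
have : ~~ uniq (jseq p).
  apply/(uniqPn 0); exists r, r.+1; split => //.
rewrite (perm_uniq (js_perm p)) => nu.
have [t [u [tB [uB [tu e]]]]] : exists t u, t \notin Bset p /\ u \notin Bset p /\
    t != u /\ barv k (p t) = barv k (p u).
  case: (boolP [exists t, exists u, [&& t \notin Bset p, u \notin Bset p, t != u &
          barv k (p t) == barv k (p u)]]).
    case/existsP => t /existsP [u /and4P [a b c /eqP d]].
    by exists t, u.
  rewrite negb_exists => /forallP hn.
  exfalso; move: nu; rewrite map_inj_in_uniq ?enum_uniq //.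
  move=> t u; rewrite !mem_enum !in_setC => tB uB e.
  apply/eqP; apply: contraT => tu.
  move: (hn t); rewrite negb_exists => /forallP /(_ u).
  by rewrite tB uB tu e eqxx.
have pe : (p u == p t) = false -> p u = rev_ord (p t).
  move=> ne; apply: val_inj => /=.
  move: ne e; rewrite /barv; case: (p t) => x hx; case: (p u) => y hy /= ne.
  have ne' : x != y by apply: contraFN ne => /eqP exy; apply/eqP; apply: val_inj => /=.
  lia.
apply: (@constr k n p s (tperm t u) (if p u == p t then set0 else [set t; u])) => //.
- apply/subsetP => x; rewrite inE => hx; rewrite in_setC.
  case: (eqVneq x t) => [->|xt]; first by [].
  case: (eqVneq x u) => [->|xu]; first by [].
  have tx : t != x by rewrite eq_sym.
  have ux : u != x by rewrite eq_sym.
  by move: hx; rewrite tpermD // eqxx.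
- case: ifP => _; first exact: sub0set.
  by apply/subsetP => x; rewrite in_set2 => /orP [] /eqP ->; rewrite in_setC.
- move=> l lB.
  case: (eqVneq l t) => [->|lt].
    rewrite tpermL; case: ifP => h; first by rewrite in_set0 /=; apply/eqP.
    by rewrite !inE eqxx /= pe.
  case: (eqVneq l u) => [->|lu].
    rewrite tpermR; case: ifP => h; first by rewrite in_set0 /=; apply/esym/eqP.
    rewrite !inE eqxx orbT /=.
    apply: rev_ord_inj; rewrite rev_ordK -pe //.
  rewrite tpermD; [|by rewrite eq_sym|by rewrite eq_sym].
  by case: ifP => _; rewrite !inE ?(negbTE lt) ?(negbTE lu).
- rewrite odd_tperm tu od /=.
  by case: ifP => _; rewrite ?cards0 // cards2 tu.
Qed.

Local Open Scope ring_scope.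

Definition SP (R : realType) n (s : {perm 'I_n}) (e : 'I_n -> R) : 'M[R]_n :=
  \matrix_(i, j) (if s i == j then e i else 0).

Lemma SP_mul (R : realType) n (s : {perm 'I_n}) (e : 'I_n -> R) (x : 'rV[R]_n) j :
  (x *m SP s e) ord0 j = x ord0 ((s^-1)%g j) * e ((s^-1)%g j).
Proof.
rewrite mxE (bigD1 ((s^-1)%g j)) //= mxE permKV eqxx big1 ?addr0 // => i ne.
rewrite mxE; case: eqP => [sij|]; last by rewrite mulr0.
by move: ne; rewrite -sij permK eqxx.
Qed.

Lemma SP_det (R : realType) n (s : {perm 'I_n}) (e : 'I_n -> R) :
  \det (SP s e) = (-1) ^+ s * \prod_i e i.
Proof.
have -> : SP s e = diag_mx (\row_i e i) *m perm_mx s.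
  apply/matrixP => i j; rewrite mul_diag_mx !mxE.
  by case: eqP => _; rewrite ?mulr1 ?mulr0.
rewrite det_mulmx det_diag det_perm mulrC; congr (_ * _).
by apply: eq_bigr => i _; rewrite mxE.
Qed.

Lemma SP_orth (R : realType) n (s : {perm 'I_n}) (e : 'I_n -> R) :
  (forall i, e i * e i = 1) -> SP s e *m (SP s e)^T = 1%:M.
Proof.
move=> he; apply/matrixP => i j; rewrite !mxE (bigD1 (s i)) //= !mxE eqxx.
rewrite big1 ?addr0; last first.
  by move=> l ne; rewrite !mxE eq_sym (negbTE ne) mul0r.
have -> : (s j == s i) = (i == j) by rewrite (inj_eq perm_inj) eq_sym.
by case: eqP => [->|_]; rewrite ?he ?mulr0.
Qed.

Lemma single_mul (R : realType) n (A : 'M[R]_n) (u : 'rV[R]_n) l j :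
  (forall i, i != l -> u ord0 i = 0) -> (u *m A) ord0 j = u ord0 l * A l j.
Proof.
move=> hu; rewrite mxE (bigD1 l) //= big1 ?addr0 // => i ne.
by rewrite hu ?mul0r.
Qed.

Lemma maps_onto_bij (T1 T2 : Type) (f : T1 -> T2) (g : T2 -> T1) S T :
  (forall y, f (g y) = y) -> (forall x, S x <-> T (f x)) -> maps_onto f S T.
Proof.
move=> fg hST y; split.
  by move=> Ty; exists (g y) => //; apply/hST; rewrite fg.
by case=> x Sx <-; apply/hST.
Qed.

Lemma addE (R : realType) m n (u v : 'M[R]_(m, n)) i j : (u + v) i j = u i j + v i j.
Proof. by rewrite mxE. Qed.
Lemma oppE (R : realType) m n (u : 'M[R]_(m, n)) i j : (- u) i j = - u i j.
Proof. by rewrite mxE. Qed.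
Lemma subE (R : realType) m n (u v : 'M[R]_(m, n)) i j : (u - v) i j = u i j - v i j.
Proof. by rewrite addE oppE. Qed.

Definition oo (R : realType) k n (p : pos k n) : 'rV[R]_n :=
  \row_i ((val (p i))%:R + 2^-1).
Definition cc (R : realType) k n (p : pos k n) i : R :=
  if val (p i) == 0%N then 0 else k%:R.
Definition dd (R : realType) k n (p : pos k n) i : R :=
  if val (p i) == 0%N then -1 else 1.

Lemma dd2 (R : realType) k n (p : pos k n) i : dd R p i * dd R p i = 1.
Proof. by rewrite /dd; case: ifP => _; lra. Qed.

Lemma ddpm (R : realType) k n (p : pos k n) i : dd R p i = 1 \/ dd R p i = -1.
Proof. by rewrite /dd; case: ifP => _; [right|left]. Qed.

Lemma c_o (R : realType) k n (p : pos k n) i : (2 <= k)%N -> i \in Bset p ->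
  cc R p i = (val (p i))%:R + 2^-1 + dd R p i * 2^-1.
Proof.
move=> k2; rewrite inE /cc /dd; case: eqP => [->|ne] /= hB.
  lra.
move/eqP: hB => ->.
have -> : (k%:R : R) = (k.-1)%:R + 1.
  by rewrite natr1 prednK //; apply: leq_trans k2.
lra.
Qed.

Lemma construct (R : realType) k n (p : pos k n) (s : {perm 'I_n}) (e : 'I_n -> R) :
  (2 <= k)%N -> perm_on (Bset p) s -> (forall i, e i = 1 \/ e i = -1) ->
  (forall l, l \in Bset p -> e l = dd R p l * dd R p (s l)) ->
  (-1) ^+ s * \prod_i e i = 1 -> ind_rot R p s.
Proof.
move=> k2 ps he heB hdet.
have ee : forall i, e i * e i = 1.
  by move=> i; case: (he i) => ->; rewrite ?mulrNN mulr1.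
set A := SP s e. set o := oo R p.
have orth : A *m A^T = 1%:M := @SP_orth R n s e ee.
split => //; exists A, (o - o *m A); split.
  by split => //; rewrite SP_det.
clear hdet orth.
set f := fun x : 'rV[R]_n => x *m A + (o - o *m A).
have fE : forall x i, f x ord0 (s i) = o ord0 (s i) + (x ord0 i - o ord0 i) * e i.
  by move=> x i; rewrite /f addE subE !SP_mul permK; ring.
have oE : forall i, o ord0 i = (val (p i))%:R + 2^-1 by move=> i; rewrite mxE.
set g := fun y : 'rV[R]_n => (y - (o - o *m A)) *m A^T.
have orth' : A^T *m A = 1%:M by apply: mulmx1C; exact: (@SP_orth R n s e ee).
have fg : forall y, f (g y) = y.
  by move=> y; rewrite /f /g -mulmxA orth' mulmx1 subrK.
have cub : forall x, cubie p x <-> cubie p (f x).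
  move=> x; split => h i.
    have -> : i = s ((s^-1)%g i) by rewrite permKV.
    rewrite fE !oE; have := h ((s^-1)%g i).
    by case: (he ((s^-1)%g i)) => ->; lra.
  have := h (s i); rewrite fE !oE.
  by case: (he i) => ->; lra.
split; first exact: (maps_onto_bij fg).
move=> l lB; apply: (maps_onto_bij fg) => x.
rewrite /oface; split => [[cx hx]|[cx hx]]; split.
- exact: (proj1 (cub x) cx).
- move=> j jB jl.
  set t := (s^-1)%g j.
  have tB : t \in Bset p by rewrite /t (perm_closed _ (perm_onV ps)).
  have tl : t != l by apply: contra jl => /eqP <-; rewrite /t permKV.
  have jt : j = s t by rewrite /t permKV.
  have xt := hx t tB tl.
  have ct := c_o R k2 tB; have cj := c_o R k2 jB.
  rewrite /cc in ct cj; rewrite cj; rewrite ct in xt.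
  rewrite jt fE !oE xt heB // -jt.
  by case: (ddpm R p t) => ->; case: (ddpm R p j) => ->; lra.
- exact: (proj2 (cub x) cx).
move=> t tB tl.
have stB : s t \in Bset p by rewrite (perm_closed _ ps).
have stl : s t != s l by rewrite (inj_eq perm_inj).
have := hx (s t) stB stl.
have ct := c_o R k2 tB; have cj := c_o R k2 stB.
rewrite /cc in ct cj; rewrite cj ct fE !oE heB //.
by case: (ddpm R p t) => ->; case: (ddpm R p (s t)) => ->; lra.
Qed.

Lemma ind_even (R : realType) k n (p : pos k n) (s : {perm 'I_n}) :
  (2 <= k)%N -> (2 <= n)%N -> (forall i, i \in Bset p) -> ind_rot R p s -> ~~ odd_perm s.
Proof.
move=> k2 n2 allB [ps [A [b [[orth dt] [_ hf]]]]].
clear orth.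
set f := fun x : 'rV[R]_n => x *m A + b.
set C : 'rV[R]_n := \row_i cc R p i.
have cB : forall i, cc R p i = (val (p i))%:R + 2^-1 + dd R p i * 2^-1.
  by move=> i; apply: c_o.
have Cface : forall l, oface p l C.
  move=> l; split.
    move=> i; rewrite mxE cB.
    have e1 : ((val (p i)).+1%:R : R) = (val (p i))%:R + 1 by rewrite natr1.
    by rewrite e1; case: (ddpm R p i) => ->; lra.
  by move=> t _ _; rewrite mxE.
have fCf : forall l, oface p (s l) (f C).
  by move=> l; apply: ((hf l (allB l) (f C)).2); exists C.
have fC : f C = C.
  have n0 : (0 < n)%N by apply: leq_trans n2.
  set a := Ordinal n0; set a' := Ordinal n2.
  apply/rowP => j.
  set l := if (s^-1)%g j == a then a' else a.
  have slj : j != s l.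
    apply/eqP => e; move: (congr1 (s^-1)%g e); rewrite permK /l.
    by case: eqP => [->|ne] // /eqP; rewrite -(inj_eq val_inj).
  rewrite ((fCf l).2 j (allB j) slj) mxE.
  by [].
have e1 : forall i, ((val (p i)).+1%:R : R) = (val (p i))%:R + 1 by move=> i; rewrite natr1.
have fdiff : forall x, f x = C + (x - C) *m A.
  move=> x; rewrite mulmxBl -{1}fC /f.
  by rewrite [RHS]addrC addrA subrK.
set V := fun l => \row_i (if i == l then cc R p i - dd R p i else cc R p i) : 'rV[R]_n.
have Vface : forall l, oface p l (V l).
  move=> l; split.
    move=> i; rewrite mxE e1 cB; case: eqP => _;
    by case: (ddpm R p i) => ->; lra.
  by move=> t _ tl; rewrite mxE (negbTE tl).
have Vrow : forall l j, f (V l) ord0 j = cc R p j - dd R p l * A l j.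
  move=> l j; rewrite fdiff addE (@single_mul R n A _ l j).
    by rewrite subE !mxE eqxx; ring.
  by move=> i il; rewrite subE !mxE (negbTE il) subrr.
have Azero : forall l j, j != s l -> A l j = 0.
  move=> l j jl.
  have := (((hf l (allB l) (f (V l))).2 (ex_intro2 _ _ (V l) (Vface l) erefl))).2 j (allB j) jl.
  rewrite Vrow -/(cc R p j) => h.
  have : dd R p l * A l j = 0 by lra.
  by case: (ddpm R p l) => ->; lra.
have Adiag : forall l, A l (s l) = dd R p l * dd R p (s l).
  move=> l.
  have bnd := ((((hf l (allB l) (f (V l))).2 (ex_intro2 _ _ (V l) (Vface l) erefl))).1 (s l)).
  rewrite Vrow e1 cB in bnd.
  have [x [cx hx] fx] := (hf l (allB l) (V (s l))).1 (Vface (s l)).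
  have : (f x) ord0 (s l) = (V (s l)) ord0 (s l) by rewrite -fx.
  rewrite fdiff addE (@single_mul R n A _ l (s l)); last first.
    move=> i il; rewrite subE (hx i (allB i) il) mxE /cc; exact: subrr.
  rewrite subE !mxE eqxx.
  have := cx l; rewrite e1 => cxl.
  rewrite !cB.
  move: cxl bnd; move: (x ord0 l) (A l (s l)) => u a.
  by case: (ddpm R p l) => ->; case: (ddpm R p (s l)) => ->; nra.
have AE : A = SP s (fun l => dd R p l * dd R p (s l)).
  apply/matrixP => l j; rewrite mxE; case: eqP => [<-|ne]; first exact: Adiag.
  by apply: Azero; apply/eqP => e; apply: ne; rewrite e.
have prod1 : \prod_i (dd R p i * dd R p (s i)) = 1.
  rewrite big_split /=.
  have -> : \prod_i dd R p (s i) = \prod_i dd R p i.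
    by symmetry; apply: (reindex_inj (@perm_inj _ s)).
  rewrite -big_split /=; apply: big1 => i _; exact: dd2.
move: dt; rewrite AE SP_det prod1 mulr1 => h.
apply/negP => od; move: h; rewrite od /=; lra.
Qed.

Lemma prod_dd (R : realType) k n (p : pos k n) (s : {perm 'I_n}) :
  \prod_i (dd R p i * dd R p (s i)) = 1.
Proof.
rewrite big_split /=.
have -> : \prod_i dd R p (s i) = \prod_i dd R p i.
  by symmetry; apply: (reindex_inj (@perm_inj _ s)).
rewrite -big_split /=; apply: big1 => i _; exact: dd2.
Qed.

Lemma dd_pm2 (R : realType) k n (p : pos k n) i j :
  dd R p i * dd R p j = 1 \/ dd R p i * dd R p j = -1.
Proof.
by case: (ddpm R p i) => ->; case: (ddpm R p j) => ->; [left|right|right|left]; ring.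
Qed.

Lemma parta1 (R : realType) k n (p : pos k n) : (2 <= k)%N -> (2 <= n)%N ->
  (forall i, i \in Bset p) -> forall s, ind_rot R p s <-> AltB (Bset p) s.
Proof.
move=> k2 n2 allB s; split.
  move=> h; split; first by case: h.
  exact: (ind_even k2 n2 allB h).
case=> ps ev.
apply: (@construct R k n p s (fun l => dd R p l * dd R p (s l))) => //.
- by move=> i; apply: dd_pm2.
- by rewrite prod_dd (negbTE ev) expr0 mulr1.
Qed.

Lemma parta2 (R : realType) k n (p : pos k n) (t0 : 'I_n) : (2 <= k)%N ->
  t0 \notin Bset p -> forall s, ind_rot R p s <-> SymB (Bset p) s.
Proof.
move=> k2 t0B s; split; first by case.
move=> ps.
apply: (@construct R k n p s
  (fun l => dd R p l * dd R p (s l) * (if l == t0 then (-1) ^+ s else 1))) => //.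
- move=> i; case: eqP => _; last by rewrite mulr1; apply: dd_pm2.
  case: (dd_pm2 R p i (s i)) => ->; case: (odd_perm s) => /=;
  rewrite ?expr1 ?expr0 ?mulr1 ?mulrNN ?mul1r; auto.
- move=> l lB; have -> : (l == t0) = false.
    by apply/negbTE; apply: contraNneq t0B => <-.
  by rewrite mulr1.
- rewrite big_split /= prod_dd mul1r (bigD1 t0) //= eqxx big1 ?mulr1.
    by case: (odd_perm s); rewrite /= ?expr1 ?expr0 ?mulrNN ?mulr1.
  by move=> i /negbTE ->.
Qed.

Local Close Scope ring_scope.

Lemma allB_of k n (p : pos k n) : #|Bset p| = n -> forall i, i \in Bset p.
Proof.
move=> hm i; apply/negPn/negP => iB; have := notinB_lt iB; rewrite hm ltnn.
by [].
Qed.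

Lemma exists_notinB k n (p : pos k n) : #|Bset p| < n -> exists t, t \notin Bset p.
Proof.
move=> hm; case: (boolP [exists t, t \notin Bset p]) => [/existsP [t ht]|hn].
  by exists t.
exfalso; have e : Bset p = setT.
  apply/setP => i; rewrite in_setT.
  by move: hn; rewrite negb_exists => /forallP /(_ i); rewrite negbK.
by move: hm; rewrite e cardsT card_ord ltnn.
Qed.

Theorem mainTheorem2 (R : realType) (k n : nat) (p : pos k n) :
  2 <= k -> 3 <= n -> 2 <= #|Bset p| ->
  let m := #|Bset p| in
  let js := jseq p in
  (* (a) *)
  ((m = n -> forall s, ind_rot R p s <-> AltB (Bset p) s) /\
   (m < n -> forall s, ind_rot R p s <-> SymB (Bset p) s)) /\
  (* (b) *)
  ((m = n \/
    ((forall r, r.+1 < size js -> nth 0 js r < nth 0 js r.+1) /\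
     2 * last 0 js < k.-1)) ->
     forall s, dep_rot p s <-> AltB (Bset p) s) /\
  ((m < n /\
    (2 * last 0 js = k.-1 \/
     exists r, r.+1 < size js /\ nth 0 js r = nth 0 js r.+1 /\ 2 * nth 0 js r < k.-1)) ->
     forall s, dep_rot p s <-> SymB (Bset p) s).
Proof.
move=> k2 n3 m2 m js.
have n2 : 1 < n by apply: leq_trans n3.
split; [split|split].
- move=> hm; exact: (parta1 R k2 n2 (allB_of hm)).
- move=> hm; have [t0 t0B] := exists_notinB hm.
  exact: (parta2 R k2 t0B).
- exact: partb1.
- exact: partb2.
Qed.
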